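(* For every DBI goal formula $\varphi$ there exists a DBI normal formula $\varphi'$ such that $\varphi$ and $\varphi'$ are equivalent over $\mathcal{K}45$, i.e., $\varphi\leftrightarrow\varphi'$ is true at every world of every Kripke model whose frame belongs to $\mathcal{K}45$.
   Context: Agents $\mathcal{A}=\{1,\dots,n\}$, $n>1$; language $\varphi ::= p \mid \neg\varphi \mid (\varphi\wedge\varphi)\mid B_i\varphi$ with standard Kripke semantics ($\mathcal{M},w\vDash B_i\varphi$ iff $\varphi$ holds at all $R_i$-successors of $w$). $\mathcal{K}45$ is the class of all Kripke frames $\langle W,R\rangle$ in which every relation $R_i$ is transitive (if $vR_iu$ and $uR_iw$ then $vR_iw$) and euclidean (if $vR_iu$ and $vR_iw$ then $uR_iw$). Target agents: $\mathsf{ta}(p)=\varnothing$, $\mathsf{ta}(\neg\phi)=\mathsf{ta}(\phi)$, $\mathsf{ta}(\phi\wedge\psi)=\mathsf{ta}(\phi)\cup\mathsf{ta}(\psi)$, $\mathsf{ta}(B_i\phi)=\{i\}$. DBI goal formulas are generated by $\varphi ::= B_i\xi \mid B_i(\xi\wedge\varphi)\mid (\varphi\wedge\varphi)\mid B_i\varphi$, where $\xi$ ranges over purely propositional (modality-free) formulas and $i\in\mathcal{A}$. DBI normal formulas: $B_i\xi$ is always DBI normal; $B_i\varphi$ and $B_i(\xi\wedge\varphi)$ are DBI normal iff $\varphi$ is DBI normal and $i\notin\mathsf{ta}(\varphi)$; $\varphi\wedge\psi$ is DBI normal iff $\varphi$ and $\psi$ are DBI normal and $\mathsf{ta}(\varphi)\cap\mathsf{ta}(\psi)=\varnothing$.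 *)

(* Defs.v *)
From mathcomp Require Import all_boot.
Set Implicit Arguments. Unset Strict Implicit. Unset Printing Implicit Defensive.

Inductive form (n : nat) : Type :=
| Var : nat -> form n
| Neg : form n -> form n
| And : form n -> form n -> form n
| Bel : 'I_n -> form n -> form n.

Arguments Var {n} _.

Fixpoint sat (n : nat) (W : Type) (R : 'I_n -> W -> W -> Prop)
    (V : nat -> W -> Prop) (phi : form n) (w : W) : Prop :=
  match phi with
  | Var p => V p w
  | Neg f => ~ sat R V f w
  | And f g => sat R V f w /\ sat R V g w
  | Bel i f => forall u, R i w u -> sat R V f u
  end.

Definition K45 (n : nat) (W : Type) (R : 'I_n -> W -> W -> Prop) : Prop :=
  forall i : 'I_n,
    (forall v u w, R i v u -> R i u w -> R i v w) /\
    (forall v u w, R i v u -> R i v w -> R i u w).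

Fixpoint ta (n : nat) (phi : form n) : {set 'I_n} :=
  match phi with
  | Var _ => set0
  | Neg f => ta f
  | And f g => ta f :|: ta g
  | Bel i _ => [set i]
  end.

Fixpoint propositional (n : nat) (phi : form n) : bool :=
  match phi with
  | Var _ => true
  | Neg f => propositional f
  | And f g => propositional f && propositional g
  | Bel _ _ => false
  end.

Inductive dbi_goal (n : nat) : form n -> Prop :=
| G_Bxi : forall i xi, propositional xi -> dbi_goal (Bel i xi)
| G_Bconj : forall i xi phi, propositional xi -> dbi_goal phi ->
    dbi_goal (Bel i (And xi phi))
| G_and : forall phi psi, dbi_goal phi -> dbi_goal psi -> dbi_goal (And phi psi)
| G_B : forall i phi, dbi_goal phi -> dbi_goal (Bel i phi).

Inductive dbi_normal (n : nat) : form n -> Prop :=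
| N_Bxi : forall i xi, propositional xi -> dbi_normal (Bel i xi)
| N_Bconj : forall i xi phi, propositional xi -> dbi_normal phi ->
    i \notin ta phi -> dbi_normal (Bel i (And xi phi))
| N_and : forall phi psi, dbi_normal phi -> dbi_normal psi ->
    ta phi :&: ta psi = set0 -> dbi_normal (And phi psi)
| N_B : forall i phi, dbi_normal phi -> i \notin ta phi ->
    dbi_normal (Bel i phi).

Definition K45_equiv (n : nat) (phi psi : form n) : Prop :=
  forall (W : Type) (R : 'I_n -> W -> W -> Prop) (V : nat -> W -> Prop),
    K45 R -> forall w : W, sat R V phi w <-> sat R V psi w.

(* Main.v *)
Require Import Defs.
From mathcomp Require Import all_boot.
From Stdlib Require List.
Set Implicit Arguments. Unset Strict Implicit. Unset Printing Implicit Defensive.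

Definition satp n W (R : 'I_n -> W -> W -> Prop) (V : nat -> W -> Prop)
  (x : seq 'I_n * form n) (w : W) : Prop := sat R V (foldr (@Bel n) x.2 x.1) w.

Definition allsat n W (R : 'I_n -> W -> W -> Prop) (V : nat -> W -> Prop)
  (L : seq (seq 'I_n * form n)) (w : W) : Prop :=
  forall x, List.In x L -> satp R V x w.

Fixpoint ncd n (a : 'I_n) (t : seq 'I_n) : bool :=
  if t is b :: t' then (a != b) && ncd b t' else true.

Definition good n (x : seq 'I_n * form n) : bool :=
  (if x.1 is a :: t then ncd a t else false) && propositional x.2.

Definition cd n (i : 'I_n) (p : seq 'I_n) : seq 'I_n :=
  if p is a :: _ then (if a == i then p else i :: p) else [:: i].

Lemma BB n W (R : 'I_n -> W -> W -> Prop) (HK : K45 R) i (P : W -> Prop) w :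
  (forall u, R i w u -> forall v, R i u v -> P v) <-> (forall u, R i w u -> P u).
Proof.
have [Ht He] := HK i; split=> H u Hu.
- exact: (H u Hu u (He _ _ _ Hu Hu)).
- move=> v Hv; exact: H (Ht _ _ _ Hu Hv).
Qed.

Lemma satp_cd n W (R : 'I_n -> W -> W -> Prop) V (HK : K45 R) i p f w :
  satp R V (cd i p, f) w <-> forall u, R i w u -> satp R V (p, f) u.
Proof.
case: p => [|a t] /=; first by [].
case: eqP => [->|_]; last by [].
rewrite /satp /=; symmetry; exact: BB.
Qed.

Lemma good_cd n (i : 'I_n) p f : good (p, f) -> good (cd i p, f).
Proof.
case: p => [|a t] //=; case: eqP => [->|/eqP Hai] //=.
rewrite /good /=; rewrite eq_sym Hai; by [].

Qed.

Lemma allsat_cons n W (R : 'I_n -> W -> W -> Prop) V x L w :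
  allsat R V (x :: L) w <-> satp R V x w /\ allsat R V L w.
Proof.
split.
- move=> H; split; first exact: H (or_introl erefl).
  move=> y Hy; exact: H (or_intror Hy).
- move=> [H1 H2] y [<-|Hy]; [exact: H1 | exact: H2].
Qed.

Lemma allsat_app n W (R : 'I_n -> W -> W -> Prop) V L1 L2 w :
  allsat R V (L1 ++ L2) w <-> allsat R V L1 w /\ allsat R V L2 w.
Proof.
split.
- move=> H; split=> y Hy; apply: H; apply/List.in_app_iff; tauto.
- move=> [H1 H2] y /List.in_app_iff [Hy|Hy]; [exact: H1 | exact: H2].
Qed.

Lemma allsat_map_cd n W (R : 'I_n -> W -> W -> Prop) V (HK : K45 R) i L w :
  allsat R V (List.map (fun x => (cd i x.1, x.2)) L) w <->
  forall u, R i w u -> allsat R V L u.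
Proof.
split.
- move=> H u Hu [p f] Hx.
  have := H (cd i p, f) (proj2 (List.in_map_iff _ _ _) (ex_intro _ (p, f) (conj erefl Hx))).
  move/(satp_cd _ HK); apply; exact: Hu.
- move=> H x /List.in_map_iff [[p f] [<- Hin]] /=.
  apply/(satp_cd _ HK) => u Hu; exact: H u Hu _ Hin.
Qed.

Lemma allsat_split n W (R : 'I_n -> W -> W -> Prop) V (P : seq 'I_n * form n -> bool) L w :
  allsat R V L w <->
  allsat R V (List.filter P L) w /\ allsat R V (List.filter (fun y => ~~ P y) L) w.
Proof.
split.
- move=> H; split=> y /List.filter_In [Hy _]; exact: H.
- move=> [H1 H2] y Hy; case HP: (P y).
  + apply: H1; apply/List.filter_In; by split.
  + apply: H2; apply/List.filter_In; by rewrite HP.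
Qed.

Lemma goal_paths n (phi : form n) : dbi_goal phi ->
  exists L, L <> [::] /\ (forall x, List.In x L -> good x) /\
  forall W (R : 'I_n -> W -> W -> Prop) V, K45 R -> forall w,
    sat R V phi w <-> allsat R V L w.
Proof.
elim.
- move=> i xi Hp; exists [:: ([:: i], xi)]; split; first by [].
  split; first by move=> x [<-|[]]; rewrite /good /= Hp.
  move=> W R V HK w; rewrite allsat_cons; split; last by case.
  by move=> H; split => // y [].
- move=> i xi phi0 Hp Hg [L [HL [Hgood Hsem]]].
  exists (([:: i], xi) :: List.map (fun x => (cd i x.1, x.2)) L); split; first by [].
  split.
  + move=> x [<-|/List.in_map_iff [[p f] [<- Hin]]]; first by rewrite /good /= Hp.
    exact: good_cd (Hgood _ Hin).
  + move=> W R V HK w; rewrite allsat_cons allsat_map_cd //=.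
    rewrite /satp /=; split.
    * move=> H; split; first by move=> u /H [].
      by move=> u /H [_ /(Hsem _ _ _ HK)].
    * move=> [H1 H2] u Hu; split; first exact: H1.
      apply/(Hsem _ _ _ HK); exact: H2.
- move=> phi1 psi1 _ [L1 [HL1 [G1 S1]]] _ [L2 [HL2 [G2 S2]]].
  exists (L1 ++ L2); split; first by destruct L1.
  split.
  + by move=> x /List.in_app_iff [H|H]; [exact: G1|exact: G2].
  + move=> W R V HK w; rewrite allsat_app /= (S1 _ _ _ HK) (S2 _ _ _ HK); tauto.
- move=> i phi0 _ [L [HL [G S]]].
  exists (List.map (fun x => (cd i x.1, x.2)) L); split; first by destruct L.
  split.
  + move=> x /List.in_map_iff [[p f] [<- Hin]]; exact: good_cd (G _ Hin).
  + move=> W R V HK w; rewrite allsat_map_cd //=; split.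
    * by move=> H u /H /(S _ _ _ HK).
    * by move=> H u /H /(S _ _ _ HK).
Qed.

Definition Top n : form n := Neg (And (Var 0) (Neg (Var 0))).

Definition conjf n (E : seq (seq 'I_n * form n)) : form n :=
  foldr (fun y acc => And y.2 acc) (Top n) E.

Lemma sat_conjf n W (R : 'I_n -> W -> W -> Prop) V E u :
  sat R V (conjf E) u <-> forall y, List.In y E -> sat R V y.2 u.
Proof.
elim: E => [|y E IH] /=.
- split=> // _ [H1 H2]; exact: H2 H1.
- rewrite IH; split.
  + by move=> [H1 H2] z [<-|Hz]; [exact: H1 | exact: H2].
  + move=> H; split; first exact: H (or_introl erefl).
    move=> z Hz; exact: H (or_intror Hz).
Qed.

Lemma prop_conjf n (E : seq (seq 'I_n * form n)) :
  (forall y, List.In y E -> propositional y.2) -> propositional (conjf E).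
Proof.
elim: E => [|y E IH] //= H; rewrite H; last by left.
by apply: IH => z Hz; apply: H; right.
Qed.

Definition hd_in n (j : 'I_n) (L : seq (seq 'I_n * form n)) : Prop :=
  exists x, List.In x L /\ ohead x.1 = Some j.

Definition Q n (k : nat) : Prop :=
  forall L : seq (seq 'I_n * form n), L <> [::] ->
  (forall x, List.In x L -> good x /\ size x.1 <= k) ->
  exists chi, dbi_normal chi /\ (forall j, j \in ta chi -> hd_in j L) /\
  forall W (R : 'I_n -> W -> W -> Prop) V, K45 R -> forall w,
    sat R V chi w <-> allsat R V L w.

Lemma allsat_head n W (R : 'I_n -> W -> W -> Prop) V i M w :
  (forall x, List.In x M -> ohead x.1 = Some i) ->
  allsat R V M w <->
  forall u, R i w u -> allsat R V (List.map (fun y => (behead y.1, y.2)) M) u.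
Proof.
move=> HM; split.
- move=> H u Hu y /List.in_map_iff [[p f] [<- Hin]].
  have := HM _ Hin; case: p Hin => [|a t] //= Hin [Ha]; subst a.
  exact: H _ Hin u Hu.
- move=> H [p f] Hin.
  have := HM _ Hin; case: p Hin => [|a t] //= Hin [Ha]; subst a.
  move=> u Hu.
  exact: H u Hu (t, f) (proj2 (List.in_map_iff _ _ _) (ex_intro _ (i :: t, f) (conj erefl Hin))).
Qed.

Lemma allsat_nil_conjf n W (R : 'I_n -> W -> W -> Prop) V E u :
  (forall y, List.In y E -> y.1 = [::]) ->
  allsat R V E u <-> sat R V (conjf E) u.
Proof.
move=> HE; rewrite sat_conjf; split.
- move=> H y Hy; have := H y Hy; by rewrite /satp (HE _ Hy).
- move=> H y Hy; rewrite /satp (HE _ Hy); exact: H.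
Qed.

Lemma tail_good n (i : 'I_n) t f : good (i :: t, f) -> t <> [::] ->
  good (t, f) /\ ohead t != Some i.
Proof.
case: t => [|a t'] //= /andP [/andP [Hia Hn] Hp] _.
split; first by rewrite /good /=; apply/andP.
apply/negP => /eqP [Hai]; by rewrite Hai eqxx in Hia.
Qed.

Lemma single n k (IHk : Q n k) (i : 'I_n) (M : seq (seq 'I_n * form n)) :
  M <> [::] ->
  (forall x, List.In x M -> [/\ good x, size x.1 <= k.+1 & ohead x.1 = Some i]) ->
  exists chi, dbi_normal chi /\ ta chi = [set i] /\
  forall W (R : 'I_n -> W -> W -> Prop) V, K45 R -> forall w,
    sat R V chi w <-> allsat R V M w.
Proof.
move=> HM HG.
set T := List.map (fun y => (behead y.1, y.2)) M.
set E := List.filter (fun y => nilp y.1) T.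
set L' := List.filter (fun y => ~~ nilp y.1) T.
have HT : forall y, List.In y T -> exists t, List.In (i :: t, y.2) M /\ y.1 = t.
  move=> y /List.in_map_iff [[p f] [<- Hin]].
  have [_ _] := HG _ Hin; case: p Hin => [|a t] //= Hin [Ha]; subst a.
  by exists t.
have HEp : forall y, List.In y E -> propositional y.2.
  move=> y /List.filter_In [/HT [t [Hin _]] _].
  by have [/andP [_ ->] _ _] := HG _ Hin.
have HEn : forall y, List.In y E -> y.1 = [::].
  by move=> y /List.filter_In [_ /nilP].
have Hsem : forall W (R : 'I_n -> W -> W -> Prop) V, K45 R -> forall w,
    allsat R V M w <-> forall u, R i w u -> sat R V (conjf E) u /\ allsat R V L' u.
  move=> W R V HK w; rewrite (allsat_head _ _ (i := i)); last first.
    by move=> x /HG [].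
  split.
  - move=> H u Hu; have := H u Hu.
    rewrite (allsat_split _ _ (fun y => nilp y.1)) -/T -/E -/L' => [[H1 H2]].
    split => //; exact/allsat_nil_conjf.
  - move=> H u Hu; have [H1 H2] := H u Hu.
    rewrite (allsat_split _ _ (fun y => nilp y.1)) -/T -/E -/L'.
    split => //; exact/allsat_nil_conjf.
case HL': L' => [|y L0].
- exists (Bel i (conjf E)); split; first by apply: N_Bxi; apply: prop_conjf.
  split; first by [].
  move=> W R V HK w; rewrite (Hsem _ _ _ HK) HL' /=; split.
  + by move=> H u Hu; split; [exact: H | move=> ? []].
  + by move=> H u /H [].
- have HL'g : forall y, List.In y L' -> good y /\ size y.1 <= k /\ ohead y.1 != Some i.
    move=> z /List.filter_In [/HT [t [Hin Hz]] Hne].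
    have [Hg Hs _] := HG _ Hin.
    have Ht : t <> [::] by move=> Ht; move: Hne; rewrite /= Hz Ht.
    have [Hg' Ho] := tail_good Hg Ht.
    simpl in Hs; clear Hne Hg; case: z Hz Hin Hg' => p f /= -> _ Hg'.
    by split.
  have [psi [Hn [Hh Hs]]] := IHk L' ltac:(by rewrite HL') (fun z Hz => let: conj a (conj b _) := HL'g z Hz in conj a b).
  exists (Bel i (And (conjf E) psi)); split.
    apply: N_Bconj => //; first exact: prop_conjf.
    apply/negP => /Hh [z [Hz Ho]].
    have [_ [_ Hne]] := HL'g _ Hz; by rewrite Ho eqxx in Hne.
  split; first by [].
  move=> W R V HK w; rewrite (Hsem _ _ _ HK) /=; split.
  + by move=> H u /H [H1 /(Hs _ _ _ HK) H2].
  + by move=> H u /H [H1 H2]; split => //; apply/(Hs _ _ _ HK).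
Qed.

Lemma hd_in_filter n (j : 'I_n) P L : hd_in j (List.filter P L) -> hd_in j L.
Proof. by move=> [x [/List.filter_In [Hx _] Ho]]; exists x. Qed.

Lemma allQ n k : Q n k.
Proof.
elim: k => [|k IHk].
  move=> [|[p f] L] // _ /(_ _ (or_introl erefl)) [/= Hg Hs].
  by case: p Hg Hs.
move=> L; have [m Hm] : exists m, length L <= m by exists (length L).
elim: m L Hm => [|m IHm] [|[p f] L0] //= Hm _ HG.
have [Hg0 Hs0] := HG _ (or_introl erefl).
case: p Hg0 Hs0 HG => [|i t] // Hg0 Hs0 HG.
set L := (i :: t, f) :: L0.
set M := List.filter (fun y => ohead y.1 == Some i) L.
set rest := List.filter (fun y => ~~ (ohead y.1 == Some i)) L.
have [chi1 [Hn1 [Ht1 Hs1]]] : exists chi, dbi_normal chi /\ ta chi = [set i] /\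
  forall W (R : 'I_n -> W -> W -> Prop) V, K45 R -> forall w,
    sat R V chi w <-> allsat R V M w.
  apply: (single IHk); first by rewrite /M /= eqxx.
  move=> x /List.filter_In [Hx /eqP Ho]; have [Hg Hs] := HG _ Hx; by split.
have Hsplit : forall W (R : 'I_n -> W -> W -> Prop) V w,
    allsat R V L w <-> allsat R V M w /\ allsat R V rest w.
  move=> W R V w; exact: allsat_split.
have Hhd1 : forall j, j \in ta chi1 -> hd_in j L.
  move=> j; rewrite Ht1 inE => /eqP ->; exists (i :: t, f); by split; [left|].
case Hr: rest => [|r rest0].
- exists chi1; split => //; split => //.
  move=> W R V HK w; rewrite Hsplit Hr (Hs1 _ _ _ HK); split; last by case.
  by move=> H; split => // ? [].
- have [chi2 [Hn2 [Hh2 Hs2]]] := IHm rest ltac:(rewrite /rest /= eqxx /=;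
      move/leP: (List.filter_length_le (fun y : seq 'I_n * form n => ~~ (ohead y.1 == Some i)) L0) => H; exact: leq_trans H Hm)
      ltac:(by rewrite Hr)
      ltac:(by move=> x /List.filter_In [Hx _]; apply: HG).
  exists (And chi1 chi2); split.
    apply: N_and => //; rewrite Ht1; apply/setP => j; rewrite !inE.
    apply/negP => /andP [/eqP -> /Hh2 [x [/List.filter_In [_ Hne] Ho]]].
    by rewrite Ho eqxx in Hne.
  split.
    move=> j /=; rewrite inE => /orP [/Hhd1 //|/Hh2]; exact: hd_in_filter.
  move=> W R V HK w; rewrite Hsplit /= (Hs1 _ _ _ HK) (Hs2 _ _ _ HK); by [].
Qed.

Lemma bound_size n (L : seq (seq 'I_n * form n)) :
  exists k, forall x, List.In x L -> size x.1 <= k.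
Proof.
elim: L => [|x L [k Hk]]; first by exists 0.
exists (maxn (size x.1) k) => y [<-|Hy]; first by rewrite leq_maxl.
exact: leq_trans (Hk _ Hy) (leq_maxr _ _).
Qed.

Theorem lemma1 (n : nat) (Hn : 1 < n) (phi : form n) :
  dbi_goal phi -> exists phi' : form n, dbi_normal phi' /\ K45_equiv phi phi'.
Proof.
move=> /goal_paths [L [HL [HG HS]]].
have [k Hk] := bound_size L.
have [chi [Hn' [_ Hs]]] := @allQ n k L HL (fun x Hx => conj (HG x Hx) (Hk x Hx)).
exists chi; split => // W R V HK w.
by rewrite (HS _ _ _ HK) (Hs _ _ _ HK).
Qed.
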